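(* Let $k\ge1$ and $n\ge k+1$. Every permutation $\sigma\in\mathcal{S}_{n,k}^{1\prec n}(1324)$ can be written uniquely as $\sigma=\sigma_1\odot(\sigma_2\odot(\cdots\odot\sigma_k))$ where each $\sigma_j$ is a primitive, i.e. $\sigma_j\in\mathcal{S}_{m_j,1}^{1\prec m_j}(1324)$ for some $m_j\ge2$ (and then $m_1+\cdots+m_k=n+k-1$).
   Context: $\mathcal{S}_n(1324)$ denotes the set of permutations of $\{1,\dots,n\}$ (in one-line notation) avoiding the pattern $1324$. For $a,k\ge1$, $\mathcal{S}_{n,k}^{a\prec n}(1324)$ is the set of $\sigma\in\mathcal{S}_n(1324)$ with $\sigma^{-1}(n)-\sigma^{-1}(a)=k$ and $\sigma^{-1}(b)>\sigma^{-1}(n)$ for all $b\in\{1,\dots,a-1\}$. Elements of $\mathcal{S}_{m,1}^{1\prec m}(1324)$ are called primitives; such a permutation has the form $\sigma_1=\pi_1\,1\,m\,\tau_1$. Given a primitive $\sigma_1=\pi_1\,1\,m\,\tau_1$ of size $m$ and $\sigma_2\in\mathcal{S}_\ell(1324)$ of the form $\sigma_2=\pi_2\,1\,\theta_2\,\ell\,\tau_2$ (words possibly empty), the product is $\sigma_1\odot\sigma_2=\widehat{\pi}_2\,\pi_1\,1\,m\,\widehat{\theta}_2\,n\,\widehat{\tau}_2\,\tau_1$, where $n=\ell+m-1$ and hats denote adding $m-1$ to each entry. *)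

(* Defs.v *)
(* Permutations of {1..n} in one-line notation are
   represented as sequences of naturals [s : seq nat] with
   [perm_eq s (iota 1 n)]. Positions are 0-based ([index]); only
   differences of positions are used, so this matches the paper. *)
From mathcomp Require Import all_boot.
Set Implicit Arguments. Unset Strict Implicit. Unset Printing Implicit Defensive.

Definition is_perm (n : nat) (s : seq nat) : bool := perm_eq s (iota 1 n).

Definition contains1324 (s : seq nat) : Prop :=
  exists i j l m, [/\ i < j, j < l, l < m & m < size s] /\
    [/\ nth 0 s i < nth 0 s l, nth 0 s l < nth 0 s j & nth 0 s j < nth 0 s m].

Definition avoids1324 (s : seq nat) : Prop := ~ contains1324 s.

Definition S_prec (n k a : nat) (s : seq nat) : Prop :=
  [/\ is_perm n s, avoids1324 s, index n s = index a s + k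
    & forall b, 1 <= b < a -> index n s < index b s].

Definition primitive (m : nat) (s : seq nat) : Prop := S_prec m 1 1 s.

(* The product sigma1 (.) sigma2, where sigma1 = pi1 1 m tau1 has size m
   and sigma2 = pi2 1 theta2 l tau2 has size l:
   result = hat pi2 ++ pi1 ++ [1; m] ++ hat theta2 ++ [n] ++ hat tau2 ++ tau1
   with n = l + m - 1 and hat adding m - 1 to each entry. *)
Definition odot (s1 s2 : seq nat) : seq nat :=
  let m := size s1 in
  let l := size s2 in
  let n := l + m - 1 in
  let i1 := index 1 s1 in
  let pi1 := take i1 s1 in
  let tau1 := drop i1.+2 s1 in
  let j1 := index 1 s2 in
  let jl := index l s2 in
  let pi2 := take j1 s2 in
  let theta2 := take (jl - j1.+1) (drop j1.+1 s2) in
  let tau2 := drop jl.+1 s2 in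
  let hat := map (fun x => x + (m - 1)) in
  hat pi2 ++ pi1 ++ [:: 1; m] ++ hat theta2 ++ [:: n] ++ hat tau2 ++ tau1.

Fixpoint odot_chain (l : seq (seq nat)) : seq nat :=
  match l with
  | [::] => [::]
  | [:: s] => s
  | s :: t => odot s (odot_chain t)
  end.

(* Main.v *)
Require Import Defs.
From mathcomp Require Import all_boot.
From mathcomp Require Import zify.
Set Implicit Arguments. Unset Strict Implicit. Unset Printing Implicit Defensive.

Lemma mkC t a b c d : a < b -> b < c -> c < d -> d < size t ->
  nth 0 t a < nth 0 t c -> nth 0 t c < nth 0 t b -> nth 0 t b < nth 0 t d ->
  contains1324 t.
Proof. by move=> *; exists a, b, c, d; split; split. Qed.

Lemma contains_transfer s t (f : nat -> nat) :
  (forall i j, i < j -> j < size s -> f i < f j) ->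
  (forall i, i < size s -> f i < size t) ->
  (forall i j, i < size s -> j < size s -> nth 0 s i < nth 0 s j ->
      nth 0 t (f i) < nth 0 t (f j)) ->
  contains1324 s -> contains1324 t.
Proof.
move=> mono sz val [i [j [l [q [[h1 h2 h3 h4] [v1 v2 v3]]]]]].
apply: (@mkC t (f i) (f j) (f l) (f q)).
- apply: mono; lia.
- apply: mono; lia.
- apply: mono; lia.
- apply: sz; lia.
- apply: val => //; lia.
- apply: val => //; lia.
- apply: val => //; lia.
Qed.

Lemma contains_prefix s t : contains1324 s -> contains1324 (s ++ t).
Proof.
apply: (contains_transfer (f := id)) => //= [i|i j hi hj]; rewrite ?size_cat; first lia.
by rewrite !nth_cat hi hj.
Qed.

Lemma contains_ins X Y Z : contains1324 (X ++ Z) -> contains1324 (X ++ Y ++ Z).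
Proof.
have E : forall i, i < size (X ++ Z) ->
   nth 0 (X ++ Y ++ Z) (if i < size X then i else i + size Y) = nth 0 (X ++ Z) i.
  move=> i; rewrite size_cat => hi; case: ifP => h.
    by rewrite !nth_cat h.
  rewrite !nth_cat h; repeat case: ifP => ?; try lia.
  congr nth; lia.
apply: (contains_transfer (f := fun i => if i < size X then i else i + size Y)).
- move=> i j; rewrite size_cat => h1 h2; case: ifP; case: ifP; lia.
- move=> i; rewrite !size_cat => h; case: ifP; lia.
- by move=> i j hi hj; rewrite !E.
Qed.

Lemma contains_mapadd c s : contains1324 s -> contains1324 (map (addn c) s).
Proof.
apply: (contains_transfer (f := id)) => //= [i|i j hi hj]; rewrite ?size_map //.
rewrite !(nth_map 0) //; lia.
Qed.

Lemma contains_mapadd' c s : contains1324 s -> contains1324 (map (fun x => x + c) s).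
Proof.
apply: (contains_transfer (f := id)) => //= [i|i j hi hj]; rewrite ?size_map //.
rewrite !(nth_map 0) //; lia.
Qed.

Lemma notin_all (p : pred nat) s x : all p s -> ~~ p x -> x \notin s.
Proof. by move=> /allP H px; apply/negP => /H; rewrite (negbTE px). Qed.

Lemma filter_none (p : pred nat) s : all (fun x => ~~ p x) s -> filter p s = [::].
Proof. by elim: s => //= x s IH /andP [/negbTE -> /IH]. Qed.

Lemma split_sb (m : nat) (Z : seq nat) :
  m \notin Z ->
  (forall i j, i < j -> j < size Z -> nth 0 Z i < m -> nth 0 Z j < m) ->
  Z = filter (fun x => m < x) Z ++ filter (fun x => x < m) Z.
Proof.
elim: Z => //= z Z IH; rewrite in_cons negb_or => /andP [hz hZ] H.
have H' : forall i j, i < j -> j < size Z -> nth 0 Z i < m -> nth 0 Z j < m.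
  by move=> i j h1 h2 h3; apply: (H i.+1 j.+1).
case: (ltngtP m z) => hmz.
- by rewrite /= -IH.
- have Hall : all (fun x => x < m) Z.
    apply/(all_nthP 0) => t ht; apply: (H 0 t.+1) => //=.
  rewrite /= (filter_none (p := fun x => m < x)); last first.
    by apply: sub_all Hall => x /=; lia.
  by rewrite (all_filterP Hall).
- by move: hz; rewrite hmz eqxx.
Qed.

Ltac slia := try (repeat match goal with
  | H : is_true (all _ _) |- _ => clear H
  | H : is_true (uniq _) |- _ => clear H
  | H : is_true (perm_eq _ _) |- _ => clear H
  | H : is_perm _ _ |- _ => clear H
  | H : is_true (~~ (_ \in _)) |- _ => clear H
  | H : is_true (_ \in _) |- _ => clear H
  | H : avoids1324 _ |- _ => clear H
  | H : S_prec _ _ _ _ |- _ => clear H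
  | H : primitive _ _ |- _ => clear H
  | H : contains1324 _ |- _ => clear H
  end); lia.


Lemma decomp1 N K s : 1 <= K -> S_prec N K 1 s ->
  exists X T Y, [/\ s = X ++ 1 :: T ++ N :: Y, size T = K.-1,
     all (fun x => 1 < x < N) (X ++ T ++ Y), uniq s & 1 < N].
Proof.
move=> hK [hp _ hidx _].
have hu : uniq s by rewrite (perm_uniq hp) iota_uniq.
have hsz : size s = N by rewrite (perm_size hp) size_iota.
have hmem : forall x, (x \in s) = (1 <= x < N.+1).
  by move=> x; rewrite (perm_mem hp) mem_iota add1n.
have hN : 0 < N.
  case: N hsz hidx {hmem hp} => // /size0nil -> /=; lia.
have m1 : 1 \in s by rewrite hmem; lia.
have mN : N \in s by rewrite hmem; lia.
have i1 := index_mem 1 s; have iN := index_mem N s.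
rewrite m1 hsz in i1; rewrite mN hsz in iN.
set p := index 1 s in hidx i1.
have n1 : nth 0 s p = 1 by rewrite nth_index.
have nN : nth 0 s (p + K) = N by rewrite -hidx nth_index.
have E : s = take p s ++ 1 :: take K.-1 (drop p.+1 s) ++ N :: drop (p+K).+1 s.
  rewrite -{1}(cat_take_drop p s) (drop_nth 0) ?hsz // n1; congr (_ ++ _ :: _).
  rewrite -{1}(cat_take_drop K.-1 (drop p.+1 s)) drop_drop.
  have -> : K.-1 + p.+1 = p + K by lia.
  by rewrite (drop_nth 0 (n := p + K)) ?nN // hsz; lia.
have hN1 : 1 < N.
  case: (ltngtP 1 N) => // h; first lia.
  rewrite -h in hidx; rewrite /p in hidx; lia.
exists (take p s), (take K.-1 (drop p.+1 s)), (drop (p+K).+1 s); split => //.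
  rewrite size_take size_drop hsz; case: ifP; lia.
set X := take p s in E *; set T := take K.-1 (drop p.+1 s) in E *;
set Y := drop (p + K).+1 s in E *.
have C1 : count_mem 1 s = 1 by rewrite count_uniq_mem // m1.
have CN : count_mem N s = 1 by rewrite count_uniq_mem // mN.
rewrite E !count_cat /= !count_cat /= ?eqxx in C1 CN.
have n1' : 1 \notin X ++ T ++ Y. apply/count_memPn; rewrite !count_cat /=; lia.
have nN' : N \notin X ++ T ++ Y by apply/count_memPn; rewrite !count_cat /=; lia.
apply/allP => x hx.
have : x \in s by rewrite E !mem_cat in_cons mem_cat in_cons; rewrite !mem_cat in hx;
  case/or3P: hx => ->; rewrite ?orbT.
rewrite hmem => hx'.
have x1 : x != 1 by apply: contraNneq n1' => <-.
have xN : x != N by apply: contraNneq nN' => <-.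
lia.
Qed.

Lemma index_pre (x : nat) X Y : x \notin X -> index x (X ++ x :: Y) = size X.
Proof. by move=> h; rewrite index_cat (negbTE h) /= eqxx addn0. Qed.

Lemma compose N X T Y : 1 < N -> all (fun x => 1 < x < N) (X ++ T ++ Y) ->
  is_perm N (X ++ 1 :: T ++ N :: Y) -> avoids1324 (X ++ 1 :: T ++ N :: Y) ->
  S_prec N (size T).+1 1 (X ++ 1 :: T ++ N :: Y).
Proof.
move=> h1 ha hp hav; split => //; last by move=> b; lia.
rewrite !all_cat in ha; case/and3P: ha => hX hT hY.
have nX1 : 1 \notin X by apply: (notin_all hX).
have nXN : N \notin X by apply: (notin_all hX); lia.
have nTN : N \notin T by apply: (notin_all hT); lia.
rewrite !index_cat (negbTE nX1) (negbTE nXN) /=.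
case: ifP => h; first lia.
rewrite index_cat (negbTE nTN) /=; case: ifP; lia.
Qed.


Definition hat c (s : seq nat) := map (fun x => x + c) s.

Lemma drop_cat_ge (s1 s2 : seq nat) n : size s1 <= n -> drop n (s1 ++ s2) = drop (n - size s1) s2.
Proof. by move=> h; rewrite drop_cat ltnNge h. Qed.

Lemma odot_shape (B D A T C : seq nat) (m l : nat) :
  1 \notin B -> size B + 2 + size D = m ->
  1 \notin A -> l \notin A -> l \notin T -> l != 1 ->
  size A + 2 + size T + size C = l ->
  odot (B ++ 1 :: m :: D) (A ++ 1 :: T ++ l :: C) =
  hat (m-1) A ++ B ++ [:: 1; m] ++ hat (m-1) T ++ [:: l + m - 1] ++ hat (m-1) C ++ D.
Proof.
move=> nB1 sz1 nA1 nAl nTl l1 sz2.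
have S1 : size (B ++ 1 :: m :: D) = m by rewrite size_cat /=; lia.
have S2 : size (A ++ 1 :: T ++ l :: C) = l by rewrite size_cat /= size_cat /=; lia.
have I1 : index 1 (B ++ 1 :: m :: D) = size B by rewrite index_cat (negbTE nB1) /= addn0.
have I2 : index 1 (A ++ 1 :: T ++ l :: C) = size A by rewrite index_cat (negbTE nA1) /= addn0.
have I3 : index l (A ++ 1 :: T ++ l :: C) = size A + (size T).+1.
  rewrite index_cat (negbTE nAl) /= eq_sym (negbTE l1) index_cat (negbTE nTl) /= eqxx.
  by rewrite addn0.
rewrite /odot S1 S2 I1 I2 I3.
rewrite !take_size_cat //.
rewrite !drop_cat_ge; try lia.
rewrite (_ : size A + (size T).+1 - (size A).+1 = size T); last lia.
rewrite (_ : (size B).+2 - size B = 2); last lia.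
rewrite (_ : (size A).+1 - size A = 1); last lia.
rewrite (_ : (size A + (size T).+1).+1 - size A = (size T).+2); last lia.
rewrite /= ?drop0 take_size_cat // drop_cat_ge // subSnn /= /hat.
by rewrite drop0.
Qed.


Lemma nth1m (m k : nat) : k < 1 -> nth 0 [:: m] k = m.
Proof. by case: k. Qed.

Ltac nthtac := rewrite !nth_cat /=; repeat (case: ifP => ?); try (exfalso; lia);
  try reflexivity; try (apply: nth1m; lia); try (congr nth; lia).

Lemma allnth (p : pred nat) s i : all p s -> i < size s -> p (nth 0 s i).
Proof. by move/(all_nthP 0); apply. Qed.

Definition fBd p q i := if i < p then i else i - q.
Definition fSd p q r i := if i < p + q then i - p else i - p - r.

Lemma mix m (P Q R D : seq nat) :
  all (fun x => m < x) P -> all (fun x => x < m) Q ->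
  all (fun x => m < x) R -> all (fun x => x < m) D ->
  avoids1324 (P ++ [:: m] ++ R) -> avoids1324 (Q ++ [:: m] ++ D) ->
  avoids1324 (P ++ Q ++ [:: m] ++ R ++ D).
Proof.
move=> hP hQ hR hD aPR aQD [i1 [i2 [i3 [i4 [[h12 h23 h34 h4] [v1 v2 v3]]]]]].
set s := P ++ Q ++ [:: m] ++ R ++ D in h4 v1 v2 v3.
move Ep: (size P) => p; move Eq: (size Q) => q; move Er: (size R) => r.
have ss : size s = p + q + 1 + r + size D by rewrite /s !size_cat /=; lia.
rewrite ss in h4.
have VP : forall i, i < p -> nth 0 s i = nth 0 P i by move=> i hi; rewrite /s; nthtac.
have VQ : forall i, p <= i < p + q -> nth 0 s i = nth 0 Q (i - p)
  by move=> i hi; rewrite /s; nthtac.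
have VM : nth 0 s (p + q) = m by rewrite /s; nthtac.
have VR : forall i, p + q < i <= p + q + r -> nth 0 s i = nth 0 R (i - p - q - 1)
  by move=> i hi; rewrite /s; nthtac.
have VD : forall i, p + q + r < i -> nth 0 s i = nth 0 D (i - p - q - r - 1)
  by move=> i hi; rewrite /s; nthtac.
have bP : forall i, i < p -> m < nth 0 s i.
  by move=> i hi; rewrite VP //; apply: (allnth hP); lia.
have bQ : forall i, p <= i < p + q -> nth 0 s i < m.
  by move=> i hi; rewrite VQ //; apply: (allnth hQ); lia.
have bR : forall i, p + q < i <= p + q + r -> m < nth 0 s i.
  by move=> i hi; rewrite VR //; apply: (allnth hR); lia.
have bD : forall i, p + q + r < i < p + q + 1 + r + size D -> nth 0 s i < m.
  by move=> i hi; rewrite VD; [apply: (allnth hD) |]; lia.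
have bB : forall i, i < p \/ p + q <= i <= p + q + r -> m <= nth 0 s i.
  move=> i [hi|hi]; first by have := bP i hi; lia.
  case: (ltngtP (p + q) i) => h; first by have := bR i; lia.
    lia.
  by rewrite -h VM.
have bS : forall i, p <= i < p + q \/ p + q + r < i < p + q + 1 + r + size D ->
    nth 0 s i < m.
  by move=> i [hi|hi]; [apply: bQ | apply: bD].
set t1 := P ++ [:: m] ++ R.
set t2 := Q ++ [:: m] ++ D.
have st1 : size t1 = p + 1 + r by rewrite /t1 !size_cat /=; lia.
have st2 : size t2 = q + 1 + size D by rewrite /t2 !size_cat /=; lia.
have eB : forall i, i < p \/ p + q <= i <= p + q + r -> nth 0 t1 ((fBd p q) i) = nth 0 s i.
  move=> i hi; rewrite /fBd; case: ifP => hp.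
    by rewrite VP // /t1 nth_cat Ep hp.
  case: (ltngtP (p + q) i) => h; last by rewrite -h VM /t1; nthtac.
    by rewrite VR; [rewrite /t1; nthtac | lia].
  lia.
have eS : forall i, p <= i < p + q \/ p + q + r < i < p + q + 1 + r + size D ->
    nth 0 t2 ((fSd p q r) i) = nth 0 s i.
  move=> i hi; rewrite /fSd; case: ifP => hp.
    by rewrite VQ; [rewrite /t2; nthtac | lia].
  by rewrite VD; [rewrite /t2; nthtac | lia].
have cl : forall i, i < p + q + 1 + r + size D ->
    (i < p \/ p + q <= i <= p + q + r) \/
    (p <= i < p + q \/ p + q + r < i < p + q + 1 + r + size D) by move=> i hi; lia.
have allB : (i1 < p \/ p + q <= i1 <= p + q + r) -> (i2 < p \/ p + q <= i2 <= p + q + r) ->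
   (i3 < p \/ p + q <= i3 <= p + q + r) -> (i4 < p \/ p + q <= i4 <= p + q + r) -> False.
  move=> b1 b2 b3 b4; apply: aPR; apply: (@mkC t1 ((fBd p q) i1) ((fBd p q) i2) ((fBd p q) i3) ((fBd p q) i4)).
  - rewrite /fBd; do 2 case: ifP; lia.
  - rewrite /fBd; do 2 case: ifP; lia.
  - rewrite /fBd; do 2 case: ifP; lia.
  - rewrite st1 /fBd; case: ifP; lia.
  1-3: have := eB i1 b1; have := eB i2 b2; have := eB i3 b3; have := eB i4 b4; lia.
have allS : (p <= i1 < p + q \/ p + q + r < i1 < p + q + 1 + r + size D) ->
   (p <= i2 < p + q \/ p + q + r < i2 < p + q + 1 + r + size D) ->
   (p <= i3 < p + q \/ p + q + r < i3 < p + q + 1 + r + size D) ->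
   (p <= i4 < p + q \/ p + q + r < i4 < p + q + 1 + r + size D) -> False.
  move=> b1 b2 b3 b4; apply: aQD; apply: (@mkC t2 ((fSd p q r) i1) ((fSd p q r) i2) ((fSd p q r) i3) ((fSd p q r) i4)).
  - rewrite /fSd; do 2 case: ifP; lia.
  - rewrite /fSd; do 2 case: ifP; lia.
  - rewrite /fSd; do 2 case: ifP; lia.
  - rewrite st2 /fSd; case: ifP; lia.
  1-3: have := eS i1 b1; have := eS i2 b2; have := eS i3 b3; have := eS i4 b4; lia.
have c1 := cl i1 ltac:(lia); have c2 := cl i2 ltac:(lia);
have c3 := cl i3 ltac:(lia); have c4 := cl i4 ltac:(lia).
case: c1 => c1.
  have m1 := bB _ c1.
  apply: allB => //.
  - case: c2 => // c2; have := bS _ c2; lia.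
  - case: c3 => // c3; have := bS _ c3; lia.
  - case: c4 => // c4; have := bS _ c4; lia.
have s1 := bS _ c1.
case: c4 => c4; last first.
  have m4 := bS _ c4.
  apply: allS => //.
  - case: c2 => // c2; have := bB _ c2; lia.
  - case: c3 => // c3; have := bB _ c3; lia.
have b4 := bB _ c4.
have hi1 : p <= i1 < p + q by lia.
have hi4 : p + q <= i4 <= p + q + r by lia.
have eQ : forall i, p <= i < p + q -> nth 0 t2 (i - p) = nth 0 s i.
  move=> i hi; have := eS i (or_introl hi); rewrite /fSd; case: ifP => // h; lia.
have eR : forall i, p + q <= i <= p + q + r -> nth 0 t1 (i - q) = nth 0 s i.
  move=> i hi; have := eB i (or_intror hi); rewrite /fBd; case: ifP => // h; lia.
have mq : nth 0 t2 q = m by rewrite /t2; nthtac.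
have mp : nth 0 t1 p = m by rewrite /t1; nthtac.
have b2m : p <= i2 < p + q -> nth 0 s i2 < m by move=> h; apply: bQ.
have b3m : p + q <= i3 -> m <= nth 0 s i3 by move=> h; apply: bB; lia.
have b3r : p + q < i3 -> m < nth 0 s i3 by move=> h; apply: bR; lia.
clear VP VQ VR VD bP bQ bR bD bB bS eB eS cl allB allS c1 c4 s1 b4.
case: (ltnP i3 (p + q)) => hi3.
  apply: aQD; apply: (@mkC t2 (i1 - p) (i2 - p) (i3 - p) q); try lia.
  - by rewrite (eQ i1) ?(eQ i3) //; lia.
  - by rewrite (eQ i2) ?(eQ i3) //; lia.
  - by rewrite mq (eQ i2); [apply: b2m|]; lia.
have b3 := b3m hi3.
case: (ltnP i2 (p + q)) => hi2.
  by have := b2m ltac:(lia); lia.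
case: (ltngtP (p + q) i2) => hi2'; last first.
  by move: v2; rewrite -hi2' VM; lia.
  lia.
have b3' := b3r ltac:(lia).
apply: aPR; apply: (@mkC t1 p (i2 - q) (i3 - q) (i4 - q)); try lia.
- by rewrite mp (eR i3) //; lia.
- by rewrite (eR i3) ?(eR i2) //; lia.
- by rewrite (eR i2) ?(eR i4) //; lia.
Qed.


Lemma contains_mapadd_inv c s : contains1324 (map (fun x => x + c) s) -> contains1324 s.
Proof.
apply: (contains_transfer (f := id)) => //= [i|i j]; rewrite ?size_map // => hi hj.
rewrite !(nth_map 0) //; slia.
Qed.

Lemma hat_all (p q : pred nat) c s : all p s -> (forall x, p x -> q (x + c)) -> all q (hat c s).
Proof. by move=> h H; rewrite /hat all_map; apply: sub_all h => x /H. Qed.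

Lemma iota_hat c l : hat c (iota 1 l) = iota c.+1 l.
Proof.
rewrite /hat (_ : c.+1 = c + 1) ?iotaDl; last slia.
by apply: eq_map => x /=; rewrite addnC.
Qed.

Lemma prod_ok m l k s1 s2 : 2 <= m -> primitive m s1 -> 1 <= k -> S_prec l k 1 s2 ->
  S_prec (l + m - 1) k.+1 1 (odot s1 s2).
Proof.
move=> hm hs1 hk hs2.
have [B [T1 [D [E1 sT1 v1 u1 _]]]] := decomp1 (leqnn 1) hs1.
have [A [T [C [E2 sT v2 u2 hl]]]] := decomp1 hk hs2.
case: T1 sT1 E1 v1 => // _ E1 v1.
have [Ps1 av1 _ _] := hs1; have [Ps2 av2 _ _] := hs2.
have psz1 : size s1 = m by rewrite (perm_size Ps1) size_iota.
have psz2 : size s2 = l by rewrite (perm_size Ps2) size_iota.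
rewrite ?cat0s in E1; rewrite ?cat0s !all_cat in v1; case/andP: v1 => vB vD.
rewrite !all_cat in v2; case/and3P: v2 => vA vT vC.
have nB1 : 1 \notin B by apply: (notin_all vB).
have nA1 : 1 \notin A by apply: (notin_all vA).
have nAl : l \notin A by apply: (notin_all vA); slia.
have nTl : l \notin T by apply: (notin_all vT); slia.
have sz1 : size B + 2 + size D = m by rewrite -psz1 E1 size_cat /=; slia.
have sz2 : size A + 2 + size T + size C = l by rewrite -psz2 E2 size_cat /= size_cat /=; slia.
rewrite E1 E2 odot_shape //; last slia.
set n := l + m - 1.
have hA : all (fun x => m < x < n) (hat (m-1) A) by apply: (hat_all vA) => x; slia.
have hT : all (fun x => m < x < n) (hat (m-1) T) by apply: (hat_all vT) => x; slia.
have hC : all (fun x => m < x < n) (hat (m-1) C) by apply: (hat_all vC) => x; slia.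
have -> : hat (m - 1) A ++ B ++ [:: 1; m] ++ hat (m - 1) T ++ [:: n] ++ hat (m - 1) C ++ D
   = (hat (m - 1) A ++ B) ++ 1 :: (m :: hat (m - 1) T) ++ n :: (hat (m - 1) C ++ D)
  by rewrite -!catA.
have -> : k.+1 = (size (m :: hat (m - 1) T)).+1 by rewrite /= size_map sT; slia.
apply: compose.
- slia.
- rewrite !all_cat /=.
  apply/and4P; split.
  + apply/andP; split; first by apply: sub_all hA => x /=; slia.
    by apply: sub_all vB => x /=; slia.
  + apply/andP; split; first slia.
    by apply: sub_all hT => x /=; slia.
  + by apply: sub_all hC => x /=; slia.
  + by apply: sub_all vD => x /=; slia.
-
  rewrite /is_perm.
  have P1 : perm_eq s1 (iota 1 m) := Ps1.
  have P2 : perm_eq (hat (m-1) s2) (iota m l).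
    rewrite (_ : iota m l = hat (m-1) (iota 1 l)); last by rewrite iota_hat; congr iota; slia.
    by apply: perm_map; exact: Ps2.
  have P3 : perm_eq (iota 1 m ++ iota m l) (m :: iota 1 n).
    have e1 : iota 1 m = iota 1 (m - 1) ++ [:: m].
      by rewrite -{1}(subnK (_ : 1 <= m)) ?iotaD //; [congr (_ ++ _); rewrite /=; congr (_ :: _) | slia]; slia.
    have e2 : iota 1 n = iota 1 (m - 1) ++ iota m l.
      rewrite /n (_ : l + m - 1 = (m - 1) + l); last slia.
      by rewrite iotaD; congr (_ ++ _); congr iota; slia.
    rewrite e1 e2; apply/permP => p; repeat (rewrite count_cat /=); slia.
  have P4 : perm_eq (m :: ((hat (m - 1) A ++ B) ++ 1 :: (m :: hat (m - 1) T) ++ n :: (hat (m - 1) C ++ D)))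
                    (s1 ++ hat (m - 1) s2).
    rewrite E1 E2 /hat !map_cat /=.
    rewrite (_ : 1 + (m - 1) = m); last slia.
    rewrite map_cat /= (_ : l + (m - 1) = n); last by rewrite /n; slia.
    apply/permP => p; repeat (rewrite count_cat /=); slia.
  have := perm_trans P4 (perm_trans (perm_cat P1 P2) P3).
  by rewrite perm_cons.
-
  rewrite -!catA /=.
  have := @mix m (hat (m - 1) A) (B ++ [:: 1]) (hat (m - 1) T ++ n :: hat (m - 1) C) D.
  rewrite -!catA /=; apply.
  + by apply: sub_all hA => x /=; slia.
  + rewrite all_cat /= andbT; apply/andP; split; last slia.
    by apply: sub_all vB => x /=; slia.
  + rewrite all_cat /=; apply/and3P; split; last first.
    * by apply: sub_all hC => x /=; slia.
    * slia.
    * by apply: sub_all hT => x /=; slia.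
  + by apply: sub_all vD => x /=; slia.
  + move=> H; apply: av2; rewrite E2.
    apply: (contains_mapadd_inv (c := m - 1)).
    rewrite map_cat /= map_cat /= (_ : 1 + (m - 1) = m); last slia.
    rewrite (_ : l + (m - 1) = n); last by rewrite /n; slia.
    move: H; rewrite /hat /=. done.
  + by move=> H; apply: av1; rewrite E1.
Qed.


Definition midm (s : seq nat) := nth 0 s (index 1 s).+1.
Definition leftp (s : seq nat) := filter (fun x => x <= midm s) s.
Definition rightp (s : seq nat) :=
  map (fun x => x - (midm s - 1)) (filter (fun x => midm s <= x) s).

Lemma nth_catr (X Y : seq nat) i : nth 0 (X ++ Y) (size X + i) = nth 0 Y i.
Proof. by rewrite nth_cat ltnNge leq_addr /= addKn. Qed.

Lemma filter_all' (p : pred nat) s : all p s -> filter p s = s.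
Proof. by move/all_filterP. Qed.

Lemma shape_lr (A B T C D : seq nat) m n :
  all (fun x => m < x < n) (A ++ T ++ C) -> all (fun x => 1 < x < m) (B ++ D) -> 1 < m < n ->
  let s := A ++ B ++ 1 :: m :: T ++ n :: C ++ D in
  [/\ midm s = m, leftp s = B ++ 1 :: m :: D &
      filter (fun x => m <= x) s = A ++ m :: T ++ n :: C].
Proof.
rewrite !all_cat => /and3P [vA vT vC] /andP [vB vD] hm s.
have n1 : 1 \notin A ++ B.
  rewrite mem_cat negb_or; apply/andP; split; [apply: (notin_all vA) | apply: (notin_all vB)]; slia.
have I : index 1 s = size (A ++ B) by rewrite /s catA index_cat (negbTE n1) /= addn0.
have M : midm s = m by rewrite /midm I -addn1 /s catA nth_catr.
split => //.
- rewrite /leftp M /s !filter_cat /= leqnn (_ : (0 < m) = true); last slia.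
  rewrite !filter_cat /= (_ : (n <= m) = false); last slia.
  rewrite !filter_cat.
  rewrite (filter_none (p := fun x => x <= m) (s := A)); last by apply: sub_all vA => x /=; slia.
  rewrite (filter_all' (p := fun x => x <= m) (s := B)); last by apply: sub_all vB => x /=; slia.
  rewrite (filter_none (p := fun x => x <= m) (s := T)); last by apply: sub_all vT => x /=; slia.
  rewrite (filter_none (p := fun x => x <= m) (s := C)); last by apply: sub_all vC => x /=; slia.
  by rewrite (filter_all' (p := fun x => x <= m) (s := D)); last by apply: sub_all vD => x /=; slia.
- rewrite /s !filter_cat /= leqnn (_ : (m <= 1) = false); last slia.
  rewrite !filter_cat /= (_ : (m <= n) = true); last slia.
  rewrite !filter_cat.
  rewrite (filter_all' (p := fun x => m <= x) (s := A)); last by apply: sub_all vA => x /=; slia.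
  rewrite (filter_none (p := fun x => m <= x) (s := B)); last by apply: sub_all vB => x /=; slia.
  rewrite (filter_all' (p := fun x => m <= x) (s := T)); last by apply: sub_all vT => x /=; slia.
  rewrite (filter_all' (p := fun x => m <= x) (s := C)); last by apply: sub_all vC => x /=; slia.
  by rewrite (filter_none (p := fun x => m <= x) (s := D)) ?cats0; last by apply: sub_all vD => x /=; slia.
Qed.


Lemma sub_hat c s : map (fun x => x - c) (hat c s) = s.
Proof.
rewrite /hat -map_comp (eq_map (g := id)) ?map_id // => x /=; by rewrite addnK.
Qed.

Lemma hat_sub c s : all (fun x => c <= x) s -> hat c (map (fun x => x - c) s) = s.
Proof.
move=> h; rewrite /hat -map_comp (eq_in_map _ id _).1 ?map_id // => x hx /=.
by rewrite subnK //; apply: (allP h).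
Qed.

Lemma filter_iota_le m n : m <= n -> filter (fun x => x <= m) (iota 1 n) = iota 1 m.
Proof.
move=> h; rewrite -(subnKC h) iotaD filter_cat.
rewrite filter_all'; last by apply/allP => x; rewrite mem_iota; slia.
rewrite filter_none ?cats0 //; apply/allP => x; rewrite mem_iota /=; slia.
Qed.

Lemma filter_iota_ge m n : 1 <= m <= n ->
  filter (fun x => m <= x) (iota 1 n) = iota m (n - m + 1).
Proof.
move=> h; rewrite {1}(_ : n = (m - 1) + (n - m + 1)); last slia.
rewrite iotaD filter_cat.
rewrite filter_none; last by apply/allP => x; rewrite mem_iota /=; slia.
rewrite filter_all'; last by apply/allP => x; rewrite mem_iota; slia.
by rewrite /=; congr iota; slia.
Qed.

Lemma sub_iota m L : 1 <= m -> map (fun x => x - (m - 1)) (iota m L) = iota 1 L.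
Proof.
move=> h; rewrite (_ : m = (m - 1).+1); last slia.
by rewrite -iota_hat subSS subn0 sub_hat.
Qed.

Lemma odot_lr m l k s1 s2 : 2 <= m -> primitive m s1 -> 1 <= k -> S_prec l k 1 s2 ->
  leftp (odot s1 s2) = s1 /\ rightp (odot s1 s2) = s2.
Proof.
move=> hm hs1 hk hs2.
have [B [T1 [D [E1 sT1 v1 u1 _]]]] := decomp1 (leqnn 1) hs1.
have [A [T [C [E2 sT v2 u2 hl]]]] := decomp1 hk hs2.
case: T1 sT1 E1 v1 => // _ E1 v1.
have [Ps1 av1 _ _] := hs1; have [Ps2 av2 _ _] := hs2.
have psz1 : size s1 = m by rewrite (perm_size Ps1) size_iota.
have psz2 : size s2 = l by rewrite (perm_size Ps2) size_iota.
rewrite ?cat0s in E1; rewrite ?cat0s !all_cat in v1; case/andP: v1 => vB vD.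
rewrite !all_cat in v2; case/and3P: v2 => vA vT vC.
have nB1 : 1 \notin B by apply: (notin_all vB).
have nA1 : 1 \notin A by apply: (notin_all vA).
have nAl : l \notin A by apply: (notin_all vA); slia.
have nTl : l \notin T by apply: (notin_all vT); slia.
have sz1 : size B + 2 + size D = m by rewrite -psz1 E1 size_cat /=; slia.
have sz2 : size A + 2 + size T + size C = l by rewrite -psz2 E2 size_cat /= size_cat /=; slia.
rewrite E1 E2 odot_shape //; last slia.
set n := l + m - 1.
have hA : all (fun x => m < x < n) (hat (m-1) A) by apply: (hat_all vA) => x; slia.
have hT : all (fun x => m < x < n) (hat (m-1) T) by apply: (hat_all vT) => x; slia.
have hC : all (fun x => m < x < n) (hat (m-1) C) by apply: (hat_all vC) => x; slia.
have H1 : all (fun x => m < x < n) (hat (m-1) A ++ hat (m-1) T ++ hat (m-1) C)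
  by rewrite !all_cat hA hT hC.
have H2 : all (fun x => 1 < x < m) (B ++ D) by rewrite all_cat vB vD.
have H3 : 1 < m < n by slia.
have [M L R] := shape_lr H1 H2 H3.
rewrite /= in M L R; rewrite /= L; split => //.
rewrite /rightp M R map_cat /= sub_hat map_cat /= sub_hat sub_hat.
congr (_ ++ _ :: _ ++ _ :: _); rewrite /n; slia.
Qed.


Lemma dec_ok n k s : 2 <= k -> S_prec n k 1 s ->
  exists m, [/\ 2 <= m, primitive m (leftp s), S_prec (n - m + 1) k.-1 1 (rightp s)
    & s = odot (leftp s) (rightp s)].
Proof.
move=> hk hs.
have [X [T [Y [E sT v u hn]]]] := decomp1 (ltnW hk) hs.
have [Ps av _ _] := hs.
case: T sT E v => [|m th] /= sT; first by slia.
move=> E v.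
rewrite !all_cat /= all_cat in v; case/and4P: v => vX vm vth vY.
have ms : m \in s by rewrite E !(mem_cat, inE) eqxx !orbT.
have Cm : count_mem m s = 1 by rewrite count_uniq_mem // ms.
rewrite E !count_cat /= !count_cat /= eqxx in Cm.
have nmX : m \notin X by apply/count_memPn; rewrite /=; slia.
have nmth : m \notin th by apply/count_memPn; rewrite /=; slia.
have nmY : m \notin Y by apply/count_memPn; rewrite /=; slia.
have N1 : nth 0 s (size X) = 1 by rewrite E -(addn0 (size X)) nth_catr.
have Nm : nth 0 s (size X).+1 = m by rewrite E -[(size X).+1]addn1 nth_catr.
have Nth : forall t, t < size th -> nth 0 s ((size X) + 2 + t) = nth 0 th t.
  by move=> t ht; rewrite E -addnA nth_catr /= nth_cat ht.
have Nn : nth 0 s ((size X) + 2 + size th) = n.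
  by rewrite E -addnA nth_catr /= -(addn0 (size th)) nth_catr.
have NY : forall i, nth 0 s ((size X) + 3 + size th + i) = nth 0 Y i.
  move=> i; rewrite E (_ : (size X) + 3 + size th + i = (size X) + (2 + (size th + (1 + i)))); last slia.
  by rewrite nth_catr /= nth_catr.
have NX : forall i, i < (size X) -> nth 0 s i = nth 0 X i by move=> i hi; rewrite E nth_cat hi.
have ss : size s = (size X) + 3 + size th + size Y by rewrite E size_cat /= size_cat /=; slia.
have hth : all (fun x => m < x) th.
  apply/(all_nthP 0) => t ht.
  have xt := allnth vth ht; have mt : nth 0 th t != m.
    by apply: contraNneq nmth => <-; apply: mem_nth.
  rewrite ltnNge; apply/negP => hle; apply: av.
  have e1 := Nth t ht.
  apply: (@mkC s (size X) (size X).+1 ((size X) + 2 + t) ((size X) + 2 + size th)); slia.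
have hX : forall i j, i < j -> j < size X -> nth 0 X i < m -> nth 0 X j < m.
  move=> i j hij hj hi; have xj := allnth vX hj.
  have mj : nth 0 X j != m by apply: contraNneq nmX => <-; apply: mem_nth.
  rewrite ltnNge; apply/negP => hle; apply: av.
  have e1 := NX i (ltn_trans hij hj); have e2 := NX j hj.
  apply: (@mkC s i j (size X).+1 ((size X) + 2 + size th)); slia.
have hY : forall i j, i < j -> j < size Y -> nth 0 Y i < m -> nth 0 Y j < m.
  move=> i j hij hj hi; have yj := allnth vY hj.
  have yi := allnth vY (ltn_trans hij hj).
  have mj : nth 0 Y j != m by apply: contraNneq nmY => <-; apply: mem_nth.
  rewrite ltnNge; apply/negP => hle; apply: av.
  have e1 := NY i; have e2 := NY j.
  apply: (@mkC s (size X) (size X).+1 ((size X) + 3 + size th + i) ((size X) + 3 + size th + j)); slia.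
have EX := split_sb nmX hX; have EY := split_sb nmY hY.
set A := filter (fun x => m < x) X in EX; set B := filter (fun x => x < m) X in EX.
set C := filter (fun x => m < x) Y in EY; set D := filter (fun x => x < m) Y in EY.
have Es : s = A ++ B ++ 1 :: m :: th ++ n :: C ++ D by rewrite E EX EY -!catA.
have vA : all (fun x => m < x < n) A.
  apply/allP => x; rewrite mem_filter => /andP [h1 h2]; have := allP vX x h2; slia.
have vB : all (fun x => 1 < x < m) B.
  apply/allP => x; rewrite mem_filter => /andP [h1 h2]; have := allP vX x h2; slia.
have vC : all (fun x => m < x < n) C.
  apply/allP => x; rewrite mem_filter => /andP [h1 h2]; have := allP vY x h2; slia.
have vD : all (fun x => 1 < x < m) D.
  apply/allP => x; rewrite mem_filter => /andP [h1 h2]; have := allP vY x h2; slia.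
have vT : all (fun x => m < x < n) th.
  apply/allP => x hx; have := allP vth x hx; have := allP hth x hx; slia.
have H1 : all (fun x => m < x < n) (A ++ th ++ C) by rewrite !all_cat vA vT vC.
have H2 : all (fun x => 1 < x < m) (B ++ D) by rewrite all_cat vB vD.
have H3 : 1 < m < n by [].
have [M L R] := shape_lr H1 H2 H3.
rewrite /= -Es in M L R.
set f := fun x => x - (m - 1).
have ER : rightp s = map f A ++ 1 :: map f th ++ (n - m + 1) :: map f C.
  rewrite /rightp M R map_cat /= map_cat /=; congr (_ ++ _ :: _ ++ _ :: _); rewrite /f; slia.
have fA : all (fun x => 1 < x < n - m + 1) (map f A)
  by rewrite all_map; apply: sub_all vA => x /=; rewrite /f; slia.
have fT : all (fun x => 1 < x < n - m + 1) (map f th)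
  by rewrite all_map; apply: sub_all vT => x /=; rewrite /f; slia.
have fC : all (fun x => 1 < x < n - m + 1) (map f C)
  by rewrite all_map; apply: sub_all vC => x /=; rewrite /f; slia.
have PL : is_perm m (B ++ 1 :: m :: D).
  rewrite /is_perm -(filter_iota_le (m:=m) (n:=n)); last slia.
  by rewrite -L /leftp M; apply: perm_filter.
have PR : is_perm (n - m + 1) (rightp s).
  rewrite /is_perm -(sub_iota (n - m + 1) (_ : 1 <= m)); last slia.
  rewrite /rightp M; apply: perm_map.
  rewrite -filter_iota_ge; last slia.
  by apply: perm_filter.
have szL := perm_size PL; rewrite size_iota size_cat /= in szL.
have szR := perm_size PR; rewrite size_iota ER size_cat /= size_cat /= in szR.
have avL : avoids1324 (B ++ 1 :: m :: D).
  move=> H; apply: av; rewrite Es.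
  have : contains1324 ([::] ++ A ++ ((B ++ [:: 1; m]) ++ (th ++ n :: C) ++ D)).
    apply: contains_ins; rewrite cat0s.
    by apply: (contains_ins (X := B ++ [:: 1; m])); rewrite -catA.
  by rewrite /= -!catA.
have avR : avoids1324 (rightp s).
  move=> H; apply: av; rewrite Es.
  have H' := contains_mapadd' (m - 1) H.
  rewrite /rightp M -/(hat (m - 1) _) hat_sub in H'; last first.
    by apply/allP => x; rewrite mem_filter => /andP [h _]; slia.
  rewrite R in H'.
  have : contains1324 (A ++ (B ++ [:: 1]) ++ ((m :: th ++ n :: C) ++ D)).
    by apply: contains_ins; rewrite catA; apply: contains_prefix.
  by rewrite -!catA /= -catA.
exists m; split.
- slia.
- rewrite L; have := @compose m B [::] D ltac:(slia).
  rewrite /=; apply; [by rewrite all_cat vB vD | exact: PL | exact: avL].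
- rewrite ER; rewrite (_ : k.-1 = (size (map f th)).+1); last by rewrite size_map; slia.
  apply: compose; first slia.
  + by rewrite !all_cat fA fT fC.
  + by rewrite -ER.
  + by rewrite -ER.
- rewrite L ER odot_shape.
  + rewrite (hat_sub (s := A)); last by apply: sub_all vA => x /=; slia.
    rewrite (hat_sub (s := th)); last by apply: sub_all vT => x /=; slia.
    rewrite (hat_sub (s := C)); last by apply: sub_all vC => x /=; slia.
    rewrite Es /= (_ : n - m + 1 + m - 1 = n) //; slia.
  + by apply: (notin_all vB).
  + slia.
  + by apply: (notin_all fA).
  + by apply: (notin_all fA); slia.
  + by apply: (notin_all fT); slia.
  + slia.
  + rewrite !size_map in szR *; slia.
Qed.


Definition allprim (l : seq (seq nat)) :=
  forall s, s \in l -> exists2 m, 2 <= m & primitive m s.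

Lemma allprim_cons s t : allprim (s :: t) -> (exists2 m, 2 <= m & primitive m s) /\ allprim t.
Proof.
move=> H; split; first by apply: H; rewrite inE eqxx.
by move=> x hx; apply: H; rewrite inE hx orbT.
Qed.

Lemma sprec_size N K s : S_prec N K 1 s -> size s = N.
Proof. by case=> P _ _ _; rewrite (perm_size P) size_iota. Qed.

Lemma chain_ok (l : seq (seq nat)) : l != [::] -> allprim l ->
  exists N, S_prec N (size l) 1 (odot_chain l) /\ sumn (map size l) = N + size l - 1.
Proof.
elim: l => // s t IH _ Hp.
have [[m hm ps] Ht] := allprim_cons Hp.
case: t IH Ht {Hp} => [|s' t'] IH Ht.
  exists m; split => //=; rewrite (sprec_size ps); slia.
have [N [HN HS]] := IH isT Ht.
exists (N + m - 1); split.
  have := prod_ok hm ps _ HN; rewrite /= in HN *; apply; slia.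
have hN := sprec_size HN; have hs := sprec_size ps.
move: HS; rewrite /= hs; slia.
Qed.

Lemma exist_chain k : forall n s, 1 <= k -> S_prec n k 1 s ->
  exists l, [/\ size l = k, allprim l & s = odot_chain l].
Proof.
elim: k => // k IH n s _ hs.
case: k IH hs => [|k] IH hs.
  exists [:: s]; split => // x; rewrite inE => /eqP ->.
  have [X [T [Y [_ _ _ _ h1]]]] := decomp1 (leqnn 1) hs.
  by exists n.
have [m [hm pl pr E]] := dec_ok (isT : 2 <= k.+2) hs.
have [l' [sl' al' el']] := IH _ _ isT pr.
exists (leftp s :: l'); split => //=.
- by rewrite sl'.
- move=> x; rewrite inE => /orP [/eqP -> | hx]; [by exists m | exact: al'].
- by case: l' sl' al' el' => // s1 t1 _ _ <-.
Qed.

Lemma uniq_chain k : forall l l', size l = k -> size l' = k -> allprim l -> allprim l' ->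
  odot_chain l = odot_chain l' -> l = l'.
Proof.
elim: k => [|k IH] [|s t] [|s' t'] //= [sl] [sl'] hp hp' E.
have [[m hm ps] Ht] := allprim_cons hp.
have [[m' hm' ps'] Ht'] := allprim_cons hp'.
case: t sl Ht E {hp hp'} => [|s2 t2] sl Ht E; case: t' sl' Ht' E => [|s2' t2'] sl' Ht' E //=.
- by rewrite E.
- by rewrite -sl in sl'.
- by rewrite -sl' in sl.
- have [N [HN _]] := chain_ok (l := s2 :: t2) isT Ht.
  have [N' [HN' _]] := chain_ok (l := s2' :: t2') isT Ht'.
  have [L1 R1] := odot_lr hm ps (isT : 0 < size (s2 :: t2)) HN.
  have [L2 R2] := odot_lr hm' ps' (isT : 0 < size (s2' :: t2')) HN'.
  have es : s = s' by rewrite -L1 E L2.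
  have et : odot_chain (s2 :: t2) = odot_chain (s2' :: t2') by rewrite -R1 E R2.
  by rewrite es (IH _ _ sl sl' Ht Ht' et).
Qed.

Theorem corollary2p5 (k n : nat) (sigma : seq nat) :
  1 <= k -> k + 1 <= n -> S_prec n k 1 sigma ->
  (exists! l : seq (seq nat),
      [/\ size l = k,
          (forall s, s \in l -> exists2 m, 2 <= m & primitive m s)
        & sigma = odot_chain l])
  /\
  (forall l : seq (seq nat),
      [/\ size l = k,
          (forall s, s \in l -> exists2 m, 2 <= m & primitive m s)
        & sigma = odot_chain l] ->
      sumn (map size l) = n + k - 1).
Proof.
move=> hk hn hs; split.
  have [l [sl al el]] := exist_chain hk hs.
  exists l; split => // l' [sl' al' el'].
  apply: (uniq_chain sl sl' al al'); by rewrite -el -el'.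
move=> l [sl al el].
have ne : l != [::] by apply/eqP => E0; rewrite E0 /= in sl; rewrite -sl in hk.
have [N [HN HS]] := chain_ok ne al.
rewrite HS -el sl in HN *.
have := sprec_size HN; rewrite (sprec_size hs) => ->.
done.
Qed.
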